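(* Let $r\ge 1$, $n$ be integers and let $\sigma,\sigma':\mathbb{Z}_n\to\{0,1\}$ be configurations with $\mathrm{maj}_r(\sigma)=\sigma'$. If $i\in\mathbb{Z}_n$ satisfies $\sigma'(i)\ne\sigma'(i+1)$, then $\sigma(i-r)=\sigma'(i)$ and $\sigma(i+1+r)=\sigma'(i+1)$.
   Context: Cells are elements of $\mathbb{Z}_n$, arithmetic mod $n$. For a configuration $\sigma$ and $\beta\in\{0,1\}$, $\#_\beta(\sigma[I])$ counts cells $\ell$ in the cyclic interval $I$ with $\sigma(\ell)=\beta$. The majority rule with radius $r$: $\mathrm{maj}_r(\sigma)(i)=0$ if $\#_0(\sigma[[i-r,i+r]])>\#_1(\sigma[[i-r,i+r]])$ and $=1$ otherwise, where $[i-r,i+r]$ is the cyclic interval $i-r,\dots,i+r$. *)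

(* Defs.v *)
From mathcomp Require Import all_boot all_order all_algebra.
From mathcomp Require Import zify.
Set Implicit Arguments. Unset Strict Implicit. Unset Printing Implicit Defensive.
Import Order.TTheory GRing.Theory Num.Theory.

(* Cells of Z_n are represented by 'I_n (n > 0 is forced by the existence of a
   cell); arithmetic is mod n. *)

Lemma cshift_proof (n : nat) (i : 'I_n) (k : int) :
  (`|((i%:Z + k) %% n%:Z)%Z| < n)%N.
Proof.
have n0 : (0 < n)%N by apply: leq_ltn_trans (ltn_ord i).
have h0 : (0 <= ((i%:Z + k) %% n%:Z)%Z)%R by apply: modz_ge0; rewrite eqz_nat -lt0n.
have h1 : (((i%:Z + k) %% n%:Z)%Z < n%:Z)%R by apply: ltz_pmod; rewrite ltz_nat.
by rewrite -ltz_nat gez0_abs.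
Qed.

Definition cshift (n : nat) (i : 'I_n) (k : int) : 'I_n :=
  Ordinal (cshift_proof i k).

Definition wcount (n r : nat) (sigma : 'I_n -> bool) (i : 'I_n) (beta : bool) : nat :=
  \sum_(k < (2 * r).+1) (sigma (cshift i (k%:Z - r%:Z)%R) == beta).

Definition maj (n r : nat) (sigma : 'I_n -> bool) : 'I_n -> bool :=
  fun i => if (wcount r sigma i false > wcount r sigma i true)%N then false else true.

(* Main.v *)
Require Import Defs.
From mathcomp Require Import all_boot all_order all_algebra.
From mathcomp Require Import zify.
Import GRing.Theory Num.Theory.

Lemma cshiftD (n : nat) (i : 'I_n) (a b : int) :
  cshift (cshift i a) b = cshift i (a + b)%R.
Proof.
have n0 : (0 < n)%N by apply: leq_ltn_trans (ltn_ord i).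
apply/val_inj => /=; congr absz.
rewrite abszE ger0_norm; last by apply: modz_ge0; rewrite eqz_nat -lt0n.
by rewrite modzDml addrA.
Qed.

Lemma cshift_eq (n : nat) (i : 'I_n) (a b : int) : a = b -> cshift i a = cshift i b.
Proof. by move=> ->. Qed.

Lemma wcount_split (n r : nat) (sigma : 'I_n -> bool) (i : 'I_n) :
  wcount r sigma i false = ((2 * r).+1 - wcount r sigma i true)%N.
Proof.
rewrite /wcount.
have H : forall m (f : 'I_m -> bool),
  (\sum_(k < m) (f k == false) + \sum_(k < m) (f k == true))%N = m.
  move=> m f; rewrite -big_split /=.
  rewrite (eq_bigr (fun _ => 1%N)); first by rewrite sum_nat_const card_ord muln1.
  by move=> k _; case: (f k).
rewrite -[X in (X - _)%N](H _ (fun k : 'I_(2 * r).+1 => sigma (cshift i (k%:Z - r%:Z)%R))).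
by rewrite addnK.
Qed.

Lemma majE (n r : nat) (sigma : 'I_n -> bool) (i : 'I_n) :
  maj r sigma i = (r < wcount r sigma i true)%N.
Proof.
rewrite /maj wcount_split.
have : (wcount r sigma i true <= (2 * r).+1)%N.
  rewrite /wcount -[X in (_ <= X)%N]card_ord -sum1_card.
  by apply: leq_sum => k _; case: (_ == _).
case: ifP => h1 h2; apply/esym; [apply/negbTE|]; lia.
Qed.

Lemma wcount_step (n r : nat) (sigma : 'I_n -> bool) (i : 'I_n) :
  (wcount r sigma (cshift i 1%:Z) true + (sigma (cshift i (- (r%:Z))%R) == true)
   = wcount r sigma i true + (sigma (cshift i (1%:Z + r%:Z)%R) == true))%N.
Proof.
rewrite /wcount.
set g := fun k : nat => (sigma (cshift i (k%:Z - r%:Z)%R) == true).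
have E1 : forall k : 'I_(2 * r).+1,
    (sigma (cshift (cshift i 1%:Z) (k%:Z - r%:Z)%R) == true) = g k.+1.
  move=> k; rewrite cshiftD /g; congr (sigma _ == _); apply: cshift_eq; lia.
rewrite (eq_bigr (fun k : 'I_(2*r).+1 => nat_of_bool (g k.+1))); last by move=> k _; rewrite E1.
have E2 : forall k : 'I_(2 * r).+1,
    (sigma (cshift i (k%:Z - r%:Z)%R) == true) = g k by [].

have -> : (sigma (cshift i (- (r%:Z))%R) == true) = g 0.
  rewrite /g; congr (sigma _ == _); apply: cshift_eq; lia.
have -> : (sigma (cshift i (1%:Z + r%:Z)%R) == true) = g (2 * r).+1.
  rewrite /g; congr (sigma _ == _); apply: cshift_eq; lia.
have L : (\sum_(k < (2 * r).+2) (g k : nat) = g 0 + \sum_(k < (2 * r).+1) g k.+1)%N.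
  by rewrite big_ord_recl.
have R : (\sum_(k < (2 * r).+2) (g k : nat) = \sum_(k < (2 * r).+1) g k + g (2 * r).+1)%N.
  by rewrite big_ord_recr.
rewrite addnC; exact: (etrans (esym L) R).
Qed.

Theorem claim1 (r n : nat) (hr : (1 <= r)%N) (sigma sigma' : 'I_n -> bool)
  (hmaj : maj r sigma = sigma') (i : 'I_n)
  (hi : sigma' i != sigma' (cshift i 1%:Z)) :
  sigma (cshift i (- (r%:Z))%R) = sigma' i /\
  sigma (cshift i (1%:Z + r%:Z)%R) = sigma' (cshift i 1%:Z).
Proof.
subst sigma'.
move: hi; rewrite !(@majE n r).
have := @wcount_step n r sigma i.
case: (sigma (cshift i (- (r%:Z))%R)); case: (sigma (cshift i (1%:Z + r%:Z)%R));
  move=> /= H hi; split; try reflexivity;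
  move: hi; case: ltnP; case: ltnP => //= *; lia.
Qed.
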